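(* On \(\mathcal F\), the Neveu–Schwarz operator \(L_1\) equals \(-D_{\mathcal F}\), where \[ D_{\mathcal F}=\sum_{n\ge1}x_n\frac{\partial}{\partial x_{n+1}}+\sum_{m\ge0}y_{m+1/2}\frac{\partial}{\partial y_{m+3/2}}. \]
   Context: \(\mathcal F=\mathbb C[x_1,x_2,\dots]\otimes\Lambda_{\mathbb C}(y_{1/2},y_{3/2},\dots)\) (identified with \(H^*(\mathrm{Fred}_0\times\mathrm{Fred}_{\mathrm{sa}}^1;\mathbb C)\), \(x_n\) and \(y_{m+1/2}\) being components of the even and odd Chern characters). Let \(\beta=\sqrt2\). For \(n>0\): \(a_{-n}=(-1)^{n-1}\frac{n!}{\beta}x_n\), \(a_n=(-1)^{n-1}\frac{\beta}{(n-1)!}\frac{\partial}{\partial x_n}\); \(a_0=0\). For \(m\ge0\): \(b_{-(m+1/2)}=(-1)^mm!\,y_{m+1/2}\), \(b_{m+1/2}=\frac{(-1)^m}{m!}\frac{\partial}{\partial y_{m+1/2}}\) (left derivative on the exterior algebra). \(L_n=\tfrac12\sum_{m\in\mathbb Z}:a_ma_{n-m}:+\tfrac14\sum_{r\in\mathbb Z+1/2}(n-2r):b_rb_{n-r}:\), where normal ordering places modes of negative index to the left of modes of positive index (with the Koszul sign when interchanging odd modes). *)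

(* Defs.v *)
(* Coefficient field: algC (algebraic complex numbers),
   a model of C sufficient since all scalars involved are algebraic. *)
From mathcomp Require Import all_boot all_order all_algebra algC.
Set Implicit Arguments. Unset Strict Implicit. Unset Printing Implicit Defensive.
Import Order.TTheory GRing.Theory Num.Theory.
Local Open Scope ring_scope.

(* A basis monomial of C[x_1,x_2,...] (x) Lambda(y_{1/2},y_{3/2},...) is a pair
   (alpha, S): alpha n = exponent of x_n (n >= 1; alpha 0 must be 0),
   S m = true iff y_{m+1/2} occurs; the exterior monomial is written
   y_{m1+1/2} /\ ... /\ y_{mr+1/2} with m1 < ... < mr.
   An element of the ambient space is a coefficient function. *)
Definition F := (nat -> nat) -> (nat -> bool) -> algC.

(* membership in the Fock space: finitely many variables, bounded degree,
   no variable x_0 -- i.e. genuine elements of C[x_1,..] (x) Lambda(y..). *)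
Definition inF (f : F) : Prop :=
  exists N : nat, forall alpha S, f alpha S != 0 ->
    [/\ alpha 0%N = 0%N,
        forall i, (alpha i <= N)%N &
        forall i, (N <= i)%N -> alpha i = 0%N /\ S i = false].

Definition Fzero : F := fun _ _ => 0.
Definition Fadd (f g : F) : F := fun a S => f a S + g a S.
Definition Fopp (f : F) : F := fun a S => - f a S.
Definition Fscale (c : algC) (f : F) : F := fun a S => c * f a S.

Definition mulx (n : nat) (f : F) : F := fun a S =>
  if (0 < a n)%N then f (fun i => (a i - (i == n))%N) S else 0.
Definition dx (n : nat) (f : F) : F := fun a S =>
  (a n).+1%:R * f (fun i => (a i + (i == n))%N) S.

Definition ycount (S : nat -> bool) (k : nat) : nat := \sum_(j < k) (S j : nat).

(* left multiplication by y_{k+1/2} and left derivative d/dy_{k+1/2} *)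
Definition muly (k : nat) (f : F) : F := fun a S =>
  if S k then (-1) ^+ ycount S k * f a (fun j => S j && (j != k)) else 0.
Definition dy (k : nat) (f : F) : F := fun a S =>
  if S k then 0 else (-1) ^+ ycount S k * f a (fun j => S j || (j == k)).

Definition beta : algC := sqrtC 2.

Definition amode (z : int) (f : F) : F :=
  match z with
  | Posz 0 => Fzero
  | Posz n.+1 => Fscale ((-1) ^+ n * beta / (n`!)%:R) (dx n.+1 f)
  | Negz k => Fscale ((-1) ^+ k * ((k.+1)`!)%:R / beta) (mulx k.+1 f)
  end.

(* fermionic modes: bmode k = b_{k+1/2}, k : int *)
Definition bmode (k : int) (f : F) : F :=
  match k with
  | Posz m => Fscale ((-1) ^+ m / (m`!)%:R) (dy m f)
  | Negz m => Fscale ((-1) ^+ m * (m`!)%:R) (muly m f)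
  end.

(* normal ordered products :a_m a_n: and :b_r b_s: (r = k+1/2, s = l+1/2):
   negative-index mode moved to the left, with Koszul sign for fermions *)
Definition nop_a (m n : int) (f : F) : F :=
  if (0 < m) && (n < 0) then amode n (amode m f) else amode m (amode n f).
Definition nop_b (k l : int) (f : F) : F :=
  if (0 <= k) && (l < 0) then Fopp (bmode l (bmode k f)) else bmode k (bmode l f).

(* truncation of L_n to |m| <= N and r = k+1/2 with |k| <= N:
   L_n = 1/2 sum_m :a_m a_{n-m}: + 1/4 sum_r (n-2r) :b_r b_{n-r}:,
   where n - r = (n - 1 - k) + 1/2 and n - 2r = n - (2k+1). *)
Definition Ltrunc (n : int) (N : nat) (f : F) : F := fun a S =>
  2^-1 * \sum_(i < (2 * N).+1) nop_a (i%:Z - N%:Z) (n - (i%:Z - N%:Z)) f a S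
  + 4^-1 * \sum_(i < (2 * N).+1)
       (n - (2 * (i%:Z - N%:Z) + 1))%:~R
         * nop_b (i%:Z - N%:Z) (n - 1 - (i%:Z - N%:Z)) f a S.

Definition Dtrunc (N : nat) (f : F) : F := fun a S =>
  \sum_(1 <= n < N) mulx n (dx n.+1 f) a S
  + \sum_(0 <= m < N) muly m (dy m.+1 f) a S.

Definition sums_to (s : nat -> F) (g : F) : Prop :=
  exists N0 : nat, forall N : nat, (N0 <= N)%N -> s N = g.

(* Main.v *)
Require Import Defs.
From mathcomp Require Import all_boot all_order all_algebra algC.
From mathcomp Require Import zify ring lra.
Import Order.TTheory GRing.Theory Num.Theory.
Local Open Scope ring_scope.

Lemma sum_sym (G : int -> algC) N :
  \sum_(i < (2 * N).+1) G (i%:Z - N%:Z) =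
  \sum_(i < N) G (Negz i) + G 0 + \sum_(i < N) G (Posz i.+1).
Proof.
rewrite -(big_mkord xpredT (fun i : nat => G (i%:Z - N%:Z))).
rewrite (@big_cat_nat _ _ _ N) /=; [|lia|lia].
rewrite (@big_ltn _ _ _ N); last by lia.
rewrite -addrA; congr (_ + _).
  rewrite big_nat_rev /= big_mkord; apply: eq_bigr => i _.
  congr G; have := ltn_ord i; lia.
rewrite subrr; congr (_ + _).
rewrite -{1}(add0n N.+1) big_addn big_mkord.
have -> : ((2 * N).+1 - N.+1 = N)%N by lia.
by apply: eq_bigr => i _; congr G; lia.
Qed.

Lemma beta_neq0 : beta != 0.
Proof. by rewrite /beta sqrtC_eq0 pnatr_eq0. Qed.

Lemma fact_neq0 n : (n`!)%:R != 0 :> algC.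
Proof. by rewrite pnatr_eq0 -lt0n fact_gt0. Qed.

Lemma sign2 i : (-1) ^+ i * (-1) ^+ i = 1 :> algC.
Proof. by rewrite -exprD -signr_odd oddD addbb. Qed.

Lemma amode_np i f a S :
  amode (Negz i) (amode (Posz i.+2) f) a S = - mulx i.+1 (dx i.+2 f) a S.
Proof.
rewrite /amode /Fscale /mulx /dx /=.
case: ifP => _; last by rewrite mulr0 oppr0.
rewrite mulrA -[RHS]mulN1r; congr (_ * _).
have hb := beta_neq0; have hf := fact_neq0 i.+1.
rewrite exprS.
have := sign2 i.
move: ((-1) ^+ i) => s hs.
rewrite -[RHS]mulN1r -hs.
have hs0 : s != 0.
  by apply/eqP => h; move: hs; rewrite h mul0r => /eqP; rewrite eq_sym oner_eq0.
field; by rewrite hf hs0 hb.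
Qed.

Lemma sign_neq0 i : (-1) ^+ i != 0 :> algC.
Proof. by rewrite signr_eq0. Qed.

Lemma bmode_np i f a S :
  bmode (Negz i) (bmode (Posz i.+1) f) a S
  = - (i.+1%:R)^-1 * muly i (dy i.+1 f) a S.
Proof.
rewrite /bmode /Fscale /muly /dy /=.
case: ifP => _; last by rewrite !mulr0.
move: (if _ then _ else _) => X; move: ((-1) ^+ ycount S i) => t.
rewrite exprS factS natrM.
have hf := fact_neq0 i; have hs0 := sign_neq0 i.
have hi : i.+1%:R != 0 :> algC by rewrite pnatr_eq0.
have hs := sign2 i.
transitivity (- ((-1) ^+ i * (-1) ^+ i) * (i.+1%:R)^-1 * (t * X)).
  field; by rewrite nat1r hi hf.
rewrite -exprD -signr_odd oddD addbb /= expr0.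
by rewrite mulN1r.
Qed.

Definition Xt (f : F) k a S := mulx k (dx k.+1 f) a S.
Definition Yt (f : F) k a S := muly k (dy k.+1 f) a S.

Lemma nopa_n f a S i : nop_a (Negz i) (1 - Negz i) f a S = - Xt f i.+1 a S.
Proof.
have -> : 1 - Negz i = Posz i.+2 by rewrite NegzE; lia.
rewrite /nop_a /=; exact: amode_np.
Qed.

Lemma nopa_p f a S j : nop_a (Posz j.+2) (1 - Posz j.+2) f a S = - Xt f j.+1 a S.
Proof.
have -> : 1 - Posz j.+2 = Negz j by rewrite NegzE; lia.
rewrite /nop_a /=; exact: amode_np.
Qed.

Lemma nopa_1 f a S : nop_a 1 (1 - 1) f a S = 0.
Proof. by rewrite subrr /nop_a /= /amode /Fscale /dx /Fzero /= !mulr0. Qed.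

Lemma nopa_0 f a S : nop_a 0 (1 - 0) f a S = 0.
Proof. by []. Qed.

Lemma nopb_n f a S i : (1 - (2 * Negz i + 1))%:~R * nop_b (Negz i) (1 - 1 - Negz i) f a S
   = -2 * Yt f i a S.
Proof.
have -> : 1 - 1 - Negz i = Posz i.+1 by rewrite NegzE; lia.
have -> : 1 - (2 * Negz i + 1) = Posz (2 * i.+1) by rewrite NegzE; lia.
rewrite (_ : nop_b _ _ _ _ _ = bmode (Negz i) (bmode (Posz i.+1) f) a S) //.
rewrite bmode_np /Yt.
have hi : i.+1%:R != 0 :> algC by rewrite pnatr_eq0.
rewrite -[(2 * i.+1)%N%:~R]pmulrn natrM; field; by rewrite nat1r.
Qed.

Lemma nopb_p f a S i : (1 - (2 * Posz i.+1 + 1))%:~R * nop_b (Posz i.+1) (1 - 1 - Posz i.+1) f a S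
   = -2 * Yt f i a S.
Proof.
have -> : 1 - 1 - Posz i.+1 = Negz i by rewrite NegzE; lia.
have -> : 1 - (2 * Posz i.+1 + 1) = - Posz (2 * i.+1) by lia.
rewrite (_ : nop_b _ _ _ _ _ = - bmode (Negz i) (bmode (Posz i.+1) f) a S) //.
rewrite bmode_np /Yt.
have hi : i.+1%:R != 0 :> algC by rewrite pnatr_eq0.
rewrite mulrNz -[(2 * i.+1)%N%:~R]pmulrn natrM; field; by rewrite nat1r.
Qed.

Lemma nopb_0 f a S : (1 - (2 * 0 + 1))%:~R * nop_b 0 (1 - 1 - 0) f a S = 0.
Proof. by rewrite mul0r. Qed.

Lemma L_id N f a S : (0 < N)%N ->
  Ltrunc 1 N f a S = - Dtrunc N f a S - 2^-1 * Xt f N a S.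
Proof.
case: N => // N _.
rewrite /Ltrunc (sum_sym (fun m => nop_a m (1 - m) f a S)).
rewrite (sum_sym (fun m => (1 - (2 * m + 1))%:~R * nop_b m (1 - 1 - m) f a S)).
rewrite nopa_0 nopb_0 !addr0.
rewrite (eq_bigr _ (fun (i : 'I_N.+1) _ => nopa_n f a S i)).
rewrite (eq_bigr _ (fun (i : 'I_N.+1) _ => nopb_p f a S i)).
rewrite (eq_bigr _ (fun (i : 'I_N.+1) _ => nopb_n f a S i)).
rewrite [X in 2^-1 * (_ + X) + _ = _]big_ord_recl /= nopa_1 add0r.
rewrite (eq_bigr _ (fun (j : 'I_N) _ => nopa_p f a S j)).
rewrite /Dtrunc big_add1 /= !big_mkord.
rewrite big_ord_recr /= !sumrN -!mulr_sumr.
rewrite /Xt /Yt.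
move: (\sum_(i < N) _) => A.
move: (\sum_(i < N.+1) _) => B.
by field.
Qed.

Section Van.
Variables (f : F) (N : nat).
Hypothesis hN : forall alpha S, f alpha S != 0 ->
    [/\ alpha 0%N = 0%N,
        forall i, (alpha i <= N)%N &
        forall i, (N <= i)%N -> alpha i = 0%N /\ S i = false].

Lemma van alpha S i : (N <= i)%N -> (alpha i != 0%N) || S i -> f alpha S = 0.
Proof.
move=> hi h; apply/eqP; apply: contraLR h => /hN [_ _ /(_ i hi) [-> ->]].
by [].
Qed.

Lemma Xt_van k a S : (N <= k.+1)%N -> Xt f k a S = 0.
Proof.
move=> hk; rewrite /Xt /mulx /dx; case: ifP => // _.
by rewrite (van _ _ _ hk) ?mulr0 //= eqxx addn1.
Qed.

Lemma Yt_van k a S : (N <= k.+1)%N -> Yt f k a S = 0.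
Proof.
move=> hk; rewrite /Yt /muly /dy; case: ifP => // _.
case: ifP => _; first by rewrite mulr0.
rewrite (van _ _ _ hk) ?mulr0 //=.
by rewrite eqxx !orbT.
Qed.

Lemma Dstab M a S : (N < M)%N -> Dtrunc M f a S = Dtrunc N.+1 f a S.
Proof.
move=> hM; rewrite /Dtrunc.
rewrite (@big_cat_nat _ _ _ N.+1 1 M) //= (@big_cat_nat _ _ _ N.+1 0 M) //=.
rewrite [X in _ + X + _]big1_seq ?addr0; last first.
  move=> n /andP[_]; rewrite mem_index_iota => /andP[hn _].
  apply: Xt_van; lia.
rewrite [X in _ + (_ + X)]big1_seq ?addr0 //.
move=> n /andP[_]; rewrite mem_index_iota => /andP[hn _].
apply: Yt_van; lia.
Qed.
End Van.

From Stdlib Require Import FunctionalExtensionality.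

Theorem proposition5p11 : forall f : F, inF f ->
  exists g : F,
    sums_to (fun N => Ltrunc 1 N f) g /\ sums_to (fun N => Fopp (Dtrunc N f)) g.
Proof.
move=> f [N hN]; exists (Fopp (Dtrunc N.+1 f)); split; exists N.+1 => M hM;
  apply: functional_extensionality => a; apply: functional_extensionality => S.
  rewrite L_id; last by lia.
  rewrite (@Xt_van f N hN) ?mulr0 ?subr0; last by lia.
  by rewrite (@Dstab f N hN).
by rewrite /Fopp (@Dstab f N hN).
Qed.
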